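(* Let $G$ be a second countable, locally compact, Hausdorff groupoid with a Haar system, and let $G'$ be an open subgroupoid of $G$ with $G^{0}\subseteq G'$. Let $\Delta=G\setminus G'$ and suppose the inclusion is regular, i.e. the map $r:\Delta\to r(\Delta)$ is open when $r(\Delta)$ is given the quotient topology from $r|_{\Delta}$. Let $\Delta^{2}=(\Delta\times\Delta)\cap G^{2}$ and $\mu:G^{2}\to G$ the product. Then $\Delta^{2}\cap\mu^{-1}(G')$ is closed in $\Delta^{2}$.
   Context: $G^{2}\subseteq G\times G$ denotes the set of composable pairs. *)

(* Defs.v *)
From HB Require Import structures.
From mathcomp Require Import all_boot all_order all_algebra.
From mathcomp Require Import all_classical all_reals all_analysis.
Set Implicit Arguments. Unset Strict Implicit. Unset Printing Implicit Defensive.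
Import Order.TTheory GRing.Theory Num.Theory.
Import numFieldNormedType.Exports.
Local Open Scope classical_set_scope.
Local Open Scope ring_scope.

(* Abstract groupoids (Renault's axioms), arrows are the elements of T *)
Record groupoid (T : Type) := Groupoid {
  G2 : set (T * T);
  gmul : T -> T -> T;
  ginv : T -> T;
  gassoc : forall x y z, G2 (x, y) -> G2 (y, z) ->
    G2 (gmul x y, z) /\ G2 (x, gmul y z) /\
    gmul (gmul x y) z = gmul x (gmul y z);
  ginvK : forall x, ginv (ginv x) = x;
  gcomp_inv_r : forall x, G2 (x, ginv x);
  gmulK : forall z x, G2 (z, x) -> gmul (gmul z x) (ginv x) = z;
  gcomp_inv_l : forall x, G2 (ginv x, x);
  gKmul : forall x y, G2 (x, y) -> gmul (ginv x) (gmul x y) = y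
}.

Section GroupoidDefs.
Variables (T : Type) (G : groupoid T).
Definition rng (x : T) : T := gmul G x (ginv G x).
Definition src (x : T) : T := gmul G (ginv G x) x.
Definition unit_space : set T := range rng.
Definition subgroupoid (H : set T) : Prop :=
  (forall x, H x -> H (ginv G x)) /\
  (forall x y, G2 G (x, y) -> H x -> H y -> H (gmul G x y)).
End GroupoidDefs.

Definition open_in {T : topologicalType} (A B : set T) : Prop :=
  exists O, open O /\ B = A `&` O.
Definition closed_in {T : topologicalType} (A B : set T) : Prop :=
  exists C, closed C /\ B = A `&` C.

Definition topological_groupoid {T : topologicalType} (G : groupoid T) : Prop :=
  continuous (ginv G) /\
  {within G2 G, continuous (fun p : T * T => gmul G p.1 p.2)}.

(* Regular inclusion: r : Delta -> r(Delta) is open, r(Delta) carrying the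
   quotient topology induced by r restricted to Delta (Delta with subspace
   topology). A subset W of r(Delta) is open iff Delta `&` r^-1(W) is open
   in Delta. *)
Definition regular_inclusion {T : topologicalType} (G : groupoid T)
  (H : set T) : Prop :=
  let Delta := ~` H in
  forall V, V `<=` Delta -> open_in Delta V ->
    open_in Delta (Delta `&` (rng G) @^-1` ((rng G) @` V)).

Definition borelType (T : ptopologicalType) := g_sigma_algebraType (@open T).

Section Haar.
Variables (R : realType) (T : ptopologicalType).
Local Open Scope ereal_scope.

Definition compactly_supported_continuous (f : T -> R) : Prop :=
  continuous f /\ compact (closure [set x | f x != 0%R]).

Definition radon (mu : {measure set (borelType T) -> \bar R}) : Prop :=
  (forall K : set T, compact K -> mu K < +oo) /\
  (forall A : set (borelType T), measurable A ->
     mu A = ereal_inf [set mu U | U in [set U : set T | open U /\ A `<=` U]]) /\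
  (forall U : set T, open U ->
     mu U = ereal_sup [set mu K | K in [set K : set T | compact K /\ K `<=` U]]).

Definition msupport (mu : {measure set (borelType T) -> \bar R}) : set T :=
  [set x | forall U : set T, open U -> U x -> 0 < mu U].

Definition haar_system (G : groupoid T)
  (lam : T -> {measure set (borelType T) -> \bar R}) : Prop :=
  (forall u, unit_space G u ->
     radon (lam u) /\ msupport (lam u) = [set x | rng G x = u]) /\
  (forall f, compactly_supported_continuous f ->
     {within unit_space G,
       continuous (fun u => fine (\int[lam u]_(x in setT) (f x)%:E))}) /\
  (forall f, compactly_supported_continuous f -> forall x,
     \int[lam (src G x)]_(y in setT) (f (gmul G x y))%:E =
     \int[lam (rng G x)]_(y in setT) (f y)%:E).
End Haar.

(* Main.v *)
Require Import Defs.
From HB Require Import structures.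
From mathcomp Require Import all_boot all_order all_algebra.
From mathcomp Require Import all_classical all_reals all_analysis.
Local Open Scope classical_set_scope.
Local Open Scope ring_scope.
Local Open Scope ereal_scope.

Lemma within_nbhs (S U : topologicalType) (A : set S) (f : S -> U) p O :
 {within A, continuous f} -> A p -> nbhs (f p) O -> nbhs p [set q | A q -> O (f q)].
Proof.
move=> cf Ap NO.
have := cf p O NO.
by case: (nbhs_subspaceP A p).
Qed.

Lemma nbhs_fst (S U : topologicalType) (x : S) (y : U) O :
  nbhs x O -> nbhs (x, y) [set q | O q.1].
Proof. move=> h. exact: (@cvg_fst _ _ (nbhs x) (nbhs y)). Qed.

Arguments within_nbhs {S U A f p O}.
Arguments nbhs_fst {S U x y O}.
Section GL.
Variables (T : Type) (G : groupoid T).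
Local Notation "a * b" := (gmul G a b).
Local Notation "a ^-1" := (ginv G a).

Lemma G2_src_rng a b : G2 G (a, b) -> src G a = rng G b.
Proof.
move=> ab.
have [h1 [h2 _]] := gassoc (gcomp_inv_l G a) ab.
have [h3 [h4 _]] := gassoc ab (gcomp_inv_r G b).
have [_ [_ e]] := gassoc h2 h3.
rewrite /src /rng.
by rewrite gmulK // in e; rewrite -e gKmul.
Qed.

Lemma src_rng_G2 a b : src G a = rng G b -> G2 G (a, b).
Proof.
move=> e.
have [_ [h1 _]] := gassoc (gcomp_inv_r G a) (gcomp_inv_l G a).
have [h2 _] := gassoc (gcomp_inv_r G b) (gcomp_inv_l G b).
have h3 : G2 G (src G a, b) by rewrite e.
have [h4 _] := gassoc h1 h3.
have ea : a * src G a = a.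
  have := gKmul (gcomp_inv_l G a). by rewrite ginvK.
by rewrite ea in h4.
Qed.

Lemma rng_mul a b : G2 G (a, b) -> rng G (a * b) = rng G a.
Proof.
move=> ab.
have [_ [h _]] := gassoc (gcomp_inv_l G a) ab.
have := G2_src_rng _ _ h.
by rewrite /src /rng ginvK => <-.
Qed.
End GL.
Arguments G2_src_rng {T G a b}.
Arguments src_rng_G2 {T G a b}.
Arguments rng_mul {T G a b}.

Theorem lemma6p35 (R : realType) (T : ptopologicalType) (G : groupoid T)
  (lam : T -> {measure set (borelType T) -> \bar R}) (H : set T) :
  @second_countable T -> locally_compact [set: T] -> hausdorff_space T ->
  topological_groupoid G -> haar_system G lam ->
  open H -> subgroupoid G H -> unit_space G `<=` H ->
  regular_inclusion G H ->
  closed_in ((~` H) `*` (~` H) `&` G2 G)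
            ((~` H) `*` (~` H) `&` G2 G `&` [set p | H (gmul G p.1 p.2)]).
Proof.
move=> _ _ _ [cinv cmul] _ oH [Hinv Hmul] uH reg.
set D2 := (~` H) `*` (~` H) `&` G2 G.
set A := D2 `&` [set p | H (gmul G p.1 p.2)].
exists (closure A); split; first exact: closed_closure.
apply/seteqP; split.
  by move=> q Aq; split; [case: Aq | apply: subset_closure].
move=> [x y] [[[/= Dx Dy] xy] clq]; split; first by split.
rewrite /=.
case: (pselect (H (gmul G x y))) => // Dz; exfalso.
set z := gmul G x y in Dz.
have Hu : H (gmul G (ginv G z) z).
  apply: uH; exists (ginv G z) => //. by rewrite /rng ginvK.
have NH : nbhs (gmul G (ginv G z, z).1 (ginv G z, z).2) H.
  by apply: open_nbhs_nbhs; split.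
have := within_nbhs cmul (gcomp_inv_l G z) NH.
case => -[A1 B1] /= [nA1 nB1] sub.
have nO1 : nbhs z (ginv G @^-1` A1).
  have := cinv z A1. rewrite /=. by apply.
move: nO1; rewrite nbhsE; case=> O1 [oO1 O1z] O1A1.
have := reg (~` H `&` O1) (@subIsetl _ _ _) (ex_intro _ O1 (conj oO1 erefl)).
case=> O' [oO' eO'].
have O'x : O' x.
  have : (~` H `&` (rng G @^-1` (rng G @` (~` H `&` O1)))) x.
    split => //; exists z; first by split.
    exact: rng_mul.
  by rewrite eO' => -[].
have nB1' : nbhs (gmul G (x, y).1 (x, y).2) B1 by [].
have := within_nbhs cmul xy nB1'.
move=> nM.
have nO' : nbhs (x, y) [set q | O' q.1].
  by apply: nbhs_fst; apply: open_nbhs_nbhs.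
have := clq _ (filterI nM nO').
case=> -[x' y'] [[[[/= Dx' Dy'] x'y'] Hz'] [/= Mq O'x']].
have Bz' := Mq x'y'.
have : (~` H `&` O') x' by [].
rewrite -eO' => -[_ [w [Dw O1w] ew]].
have g1 : G2 G (ginv G w, x').
  apply: src_rng_G2; by rewrite /src ginvK.
have [_ [g2 _]] := gassoc g1 x'y'.
have Hw' : H (gmul G (ginv G w) (gmul G x' y')).
  have sq := sub (ginv G w, gmul G x' y').
  apply: (sq _ g2); split; [exact: (O1A1 _ O1w) | exact: Bz'].
have [g3 _] := gassoc g2 (gcomp_inv_r G (gmul G x' y')).
have := Hmul _ _ g3 Hw' (Hinv _ Hz').
rewrite gmulK // => /Hinv; rewrite ginvK.
exact: Dw.
Qed.
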